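(* For a word $u$ of length $n$, its left-seed array $\mathsf{LSeed}[1..n]$, where $\mathsf{LSeed}[i]=\mathrm{lseed}(u[1..i])$, can be computed in $O(n)$ time.
   Context: Words are over a finite alphabet; $u[1..i]$ is the prefix of length $i$. A word $s$ covers $w$ if every position of $w$ lies in some occurrence of $s$ in $w$. A seed of a word $x$ is a factor $s$ of $x$ such that $x$ is a factor of some word covered by $s$; a left seed of $x$ is a seed of $x$ which is a prefix of $x$; $\mathrm{lseed}(x)$ is the length of the shortest left seed of $x$. *)

(* Defs.v *)
From mathcomp Require Import all_boot.
Set Implicit Arguments. Unset Strict Implicit. Unset Printing Implicit Defensive.

(* Words are sequences of letters; letters are natural numbers (any word is
   over the finite alphabet of letters occurring in it). *)
Definition word := seq nat.

Definition occurs_at (s w : word) (i : nat) : bool :=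
  (i + size s <= size w) && (take (size s) (drop i w) == s).

Definition covers (s w : word) : Prop :=
  forall p, p < size w -> exists i, occurs_at s w i && (i <= p < i + size s).

Definition seed (s x : word) : Prop :=
  infix s x /\ exists w, covers s w /\ infix x w.

Definition left_seed (s x : word) : Prop := seed s x /\ prefix s x.

(* is_lseed x l  <->  lseed(x) = l, i.e. l is the length of the shortest
   left seed of x *)
Definition is_lseed (x : word) (l : nat) : Prop :=
  (exists s, left_seed s x /\ size s = l) /\
  (forall s, left_seed s x -> l <= size s).

(* Registers and memory cells hold natural numbers; every instruction
   costs one step. *)
Inductive instr : Type :=
  | IConst of nat & nat
  | IAdd   of nat & nat & nat
  | ISub   of nat & nat & nat
  | ILoad  of nat & nat
  | IStore of nat & nat
  | IJz    of nat & nat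
  | IJmp   of nat
  | IHalt.

Record state : Type := State { pc : nat; regs : nat -> nat; memory : nat -> nat }.

Definition upd (f : nat -> nat) (a v : nat) : nat -> nat :=
  fun x => if x == a then v else f x.

Definition halted (prog : seq instr) (st : state) : bool :=
  match nth IHalt prog (pc st) with IHalt => true | _ => false end.

Definition step (prog : seq instr) (st : state) : state :=
  let: State p R M := st in
  match nth IHalt prog p with
  | IConst r k => State p.+1 (upd R r k) M
  | IAdd r a b => State p.+1 (upd R r (R a + R b)) M
  | ISub r a b => State p.+1 (upd R r (R a - R b)) M
  | ILoad r a => State p.+1 (upd R r (M (R a))) M
  | IStore a b => State p.+1 R (upd M (R a) (R b))
  | IJz r l => State (if R r == 0 then l else p.+1) R M
  | IJmp l => State l R M
  | IHalt => st
  end.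

Definition exec (prog : seq instr) (t : nat) (st : state) : state :=
  iter t (step prog) st.

(* Input convention: register 0 holds n = |u|, memory cells 0..n-1 hold the
   letters of u, everything else is 0. *)
Definition init_state (u : word) : state :=
  State 0 (fun r => if r == 0 then size u else 0)
          (fun a => if a < size u then nth 0 u a else 0).

(* Main.v *)
Require Import Defs.
From mathcomp Require Import all_boot zify.
Set Implicit Arguments. Unset Strict Implicit. Unset Printing Implicit Defensive.

Module M1.

Lemma occurs_atP s w i : occurs_at s w i <->
  (i + size s <= size w /\ forall k, k < size s -> nth 0 w (i+k) = nth 0 s k).
Proof.
rewrite /occurs_at; split.
  case/andP=> H /eqP E; split=> // k Hk.
  by rewrite -E nth_take // nth_drop.
case=> H E; rewrite H /=; apply/eqP/(@eq_from_nth _ 0).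
  rewrite size_takel // size_drop; lia.
move=> k; rewrite size_takel ?size_drop; last lia.
by move=> Hk; rewrite nth_take // nth_drop E.
Qed.

Section Math.
Variable u : word.
Local Notation n := (size u).
Local Notation a k := (nth 0 u k).

Definition occ L j := j + L <= n /\ forall k, k < L -> a (j+k) = a k.
Definition occb L j := (j + L <= n) && all (fun k => a (j+k) == a k) (iota 0 L).
Lemma occP L j : reflect (occ L j) (occb L j).
Proof.
apply: (iffP andP) => [[H /allP A]|[H A]]; split => //.
  by move=> k Hk; apply/eqP/A; rewrite mem_iota.
by apply/allP => k; rewrite mem_iota => /andP[_ Hk]; apply/eqP/A.
Qed.

Definition cov L q := forall p, p < q -> exists j, [/\ occ L j, j + L <= q & j <= p < j + L].
Definition covb L q := all (fun p => has (fun j => [&& occb L j, j + L <= q & j <= p < j + L]) (iota 0 q)) (iota 0 q).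
Lemma covP L q : reflect (cov L q) (covb L q).
Proof.
apply: (iffP allP) => [A p Hp|C p].
  have : p \in iota 0 q by rewrite mem_iota.
  move/A => /hasP[j _ /and3P[/occP H1 H2 H3]].
  by exists j.
rewrite mem_iota => /andP[_ Hp]; case: (C p Hp) => j [H1 H2 H3].
apply/hasP; exists j; first by rewrite mem_iota; lia.
by apply/and3P; split => //; apply/occP.
Qed.

Definition sfx q b := b <= q /\ forall k, k < b -> a k = a (q - b + k).

Lemma cov_sfx L q : 0 < q -> cov L q -> [/\ 0 < L, L <= q, q <= n, occ L (q - L) & sfx q L].
Proof.
move=> q0 C; case: (C q.-1 ltac:(lia)) => j [[H1 H2] H3 H4].
have E : j = q - L by lia.
subst j; split; try lia.
- by split.
- split; first lia. by move=> k Hk; rewrite H2.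
Qed.

Lemma sfx_trans q b c : sfx q b -> sfx b c -> sfx q c.
Proof.
move=> [H1 H2] [H3 H4]; split; first lia.
move=> k Hk; rewrite (H4 k Hk) (H2 (b - c + k)); last lia.
congr (a _); lia.
Qed.

Lemma sfx_sub q b c : sfx q b -> sfx q c -> c <= b -> sfx b c.
Proof.
move=> [H1 H2] [H3 H4] cb; split => // k Hk.
rewrite (H4 k Hk) (H2 (b - c + k)); last lia. congr (a _); lia.
Qed.

Lemma sfx_occ q L : q <= n -> sfx q L -> occ L (q - L).
Proof.
move=> qn [H1 H2]; split; first lia.
by move=> k Hk; rewrite (H2 k Hk).
Qed.

Lemma cov_trans x y z : cov x y -> cov y z -> cov x z.
Proof.
move=> Cxy Cyz p Hp.
case: (Cyz p Hp) => j [[Hj1 Hj2] Hj3 Hj4].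
case: (Cxy (p - j) ltac:(lia)) => j' [[Hk1 Hk2] Hk3 Hk4].
exists (j + j'); split; try lia.
split; first lia.
move=> k Hk; rewrite -addnA Hj2; last lia.
by rewrite Hk2.
Qed.

Lemma cov_cut L q b : cov L q -> sfx q b -> L <= b -> cov L b.
Proof.
move=> C Sb Lb p Hp.
have q0 : 0 < q by case: Sb; lia.
case: (cov_sfx q0 C) => L0 Lq qn _ SL.
have SbL : sfx b L := sfx_sub Sb SL Lb.
have bq : b <= q by case: Sb.
case: (leqP (b - L) p) => H.
  exists (b - L); split; try lia.
  apply: sfx_occ => //; lia.
case: (C p ltac:(lia)) => j [H1 H2 H3].
by exists j; split => //; lia.
Qed.

Lemma cov_pref L q j : cov L q -> occ L j -> j + L <= q -> cov L (j + L).
Proof.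
move=> C O H p Hp.
case: (leqP j p) => Hjp; first by exists j; split => //; lia.
case: (C p ltac:(lia)) => j' [H1 H2 H3]; exists j'; split => //; lia.
Qed.

Lemma cov_ext L q j : cov L q -> occ L j -> j <= q <= j + L -> cov L (j + L).
Proof.
move=> C O H p Hp.
case: (ltnP p q) => Hpq.
  case: (C p Hpq) => j' [H1 H2 H3]; exists j'; split => //; lia.
by exists j; split => //; lia.
Qed.

Lemma cov_refl L : L <= n -> cov L L.
Proof.
move=> Ln p Hp; exists 0; split => //; try lia.
Qed.

End Math.

End M1.
Import M1.

Module M2.

Section Math2.
Variable u : word.
Local Notation n := (size u).
Local Notation a k := (nth 0 u k).
Local Notation occ := (occ u).
Local Notation cov := (cov u).
Local Notation sfx := (sfx u).

Definition brdb q b := (b < q) && all (fun k => a k == a (q - b + k)) (iota 0 b).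
Lemma brdP q b : reflect (b < q /\ sfx q b) (brdb q b).
Proof.
apply: (iffP andP) => [[H /allP A]|[H [_ A]]]; split => //.
  split; first lia. by move=> k Hk; apply/eqP/A; rewrite mem_iota.
by apply/allP => k; rewrite mem_iota => /andP[_ Hk]; apply/eqP/A.
Qed.

Definition Bm q := \max_(b < q | brdb q b) b.

Lemma Bm_spec q : 0 < q -> (Bm q < q /\ sfx q (Bm q)) /\ forall b, b < q -> sfx q b -> b <= Bm q.
Proof.
move=> q0; split.
  have P0 : brdb q (Ordinal q0).
    by apply/brdP; split => //; split => //.
  rewrite /Bm (bigmax_eq_arg (Ordinal q0)) //.
  case: arg_maxnP => // i Pi _; exact/brdP.
move=> b bq Sb.
have -> : b = Ordinal bq by [].
by apply: (leq_bigmax_cond (Ordinal bq)); apply/brdP.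
Qed.

Lemma Cex q : exists L, covb u L q || (L == q).
Proof. by exists q; rewrite eqxx orbT. Qed.

Definition Cm q := ex_minn (Cex q).

Lemma Cm_spec q : q <= n -> cov (Cm q) q /\ forall L, cov L q -> Cm q <= L.
Proof.
move=> qn; rewrite /Cm; case: ex_minnP => m Pm Min; split.
  case/orP: Pm => [/covP //|/eqP ->]; exact: cov_refl.
by move=> L /covP C; apply: Min; rewrite C.
Qed.

Definition Rng q c := \max_(q' < q | Cm q' == c) q'.

Lemma Rng_ge q c q' : q' < q -> Cm q' = c -> q' <= Rng q c.
Proof.
move=> H E; have -> : q' = Ordinal H by [].
by apply: (leq_bigmax_cond (Ordinal H)); rewrite /= E.
Qed.

Lemma Rng_wit q c : 0 < Rng q c -> exists q', [/\ q' < q, Cm q' = c & q' = Rng q c].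
Proof.
case: (boolP [exists q' : 'I_q, Cm q' == c]) => [/existsP[i0 Pi0]|/existsPn N] R0.
  move: R0; rewrite /Rng (bigmax_eq_arg i0) //.
  case: arg_maxnP => // i Pi _ _; exists i; split => //; exact/eqP.
suff : Rng q c <= 0 by lia.
apply/bigmax_leqP => i Pi; by move: (N i); rewrite Pi.
Qed.

Theorem Cm_rec q : 0 < q -> q <= n ->
  Cm q = if (0 < Bm q) && (q - Cm (Bm q) <= Rng q (Cm (Bm q))) then Cm (Bm q) else q.
Proof.
move=> q0 qn.
have [[bq Sb] Bmax] := Bm_spec q0.
set b := Bm q in bq Sb Bmax *.
set c := Cm b.
have [Cq Cqmin] := Cm_spec qn.
set m := Cm q in Cq Cqmin *.
have [m0 mq _ _ Sm] := cov_sfx q0 Cq.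
have bn : b <= n by lia.
have [Cb Cbmin] := Cm_spec bn.
case: (ltnP m q) => Hmq.
- have mb : m <= b by apply: Bmax.
  have b0 : 0 < b by lia.
  have Cmb : cov m b := cov_cut Cq Sb mb.
  have cm : c <= m by apply: Cbmin.
  have [c0 cb _ _ Sc] := cov_sfx b0 Cb.
  have Sbm : sfx b m := sfx_sub Sb Sm mb.
  have Ccm : cov c m := cov_cut Cb Sbm cm.
  have Ccq : cov c q := cov_trans Ccm Cq.
  have mc : m <= c by apply: Cqmin.
  have Emc : m = c by lia.
  rewrite b0 /=.
  suff -> : q - c <= Rng q c by rewrite Emc.
  case: (Ccq (q - c).-1 ltac:(lia)) => j [Oj Hj1 Hj2].
  set q' := j + c.
  have Cq' : cov c q' := cov_pref Ccq Oj Hj1.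
  have q'0 : 0 < q' by lia.
  have q'n : q' <= n by case: Oj.
  have [Cm' Cm'min] := Cm_spec q'n.
  have [m'0 m'q' _ _ Sm'] := cov_sfx q'0 Cm'.
  have [_ _ _ _ Sc'] := cov_sfx q'0 Cq'.
  have m'c : Cm q' <= c by apply: Cm'min.
  have Cm'c : cov (Cm q') c := cov_cut Cm' Sc' m'c.
  have : c <= Cm q' by apply: Cbmin; exact: cov_trans Cm'c Cb.
  move=> cm'.
  have E : Cm q' = c by lia.
  apply: leq_trans (Rng_ge _ E); lia.
- have Emq : m = q by lia.
  case: ifP => // /andP[b0 HR].
  have [c0 cb _ _ Sc] := cov_sfx b0 Cb.
  have : 0 < Rng q c by lia.
  case/Rng_wit => q' [H1 H2 H3].
  have q'n : q' <= n by lia.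
  have [Cq' _] := Cm_spec q'n; rewrite H2 in Cq'.
  have Sqc : sfx q c := sfx_trans Sb Sc.
  have Oc : occ c (q - c) := sfx_occ qn Sqc.
  have := cov_ext Cq' Oc ltac:(lia).
  rewrite subnK; last lia.
  move/Cqmin; lia.
Qed.

(* KMP *)
Definition InvK q k := (k < q.-1 /\ sfx q.-1 k) /\
  forall b, b < q.-1 -> sfx q.-1 b -> k < b -> a b <> a q.-1.

Lemma InvK_init q : 1 < q -> InvK q (Bm q.-1).
Proof.
move=> q1; have [[H1 H2] H3] := Bm_spec (ltac:(lia) : 0 < q.-1).
split => // b Hb Sb kb; have := H3 b Hb Sb; lia.
Qed.

Lemma InvK_step q k : 1 < q -> InvK q k -> 0 < k -> a k <> a q.-1 -> InvK q (Bm k).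
Proof.
move=> q1 [[kq Sk] I] k0 Nk.
have [[H1 H2] H3] := Bm_spec k0.
split; first by split; [lia | exact: sfx_trans Sk H2].
move=> b Hb Sb kb.
case: (ltngtP b k) => Hbk.
- have := H3 b Hbk (sfx_sub Sk Sb ltac:(lia)); lia.
- exact: I.
- by rewrite Hbk.
Qed.

Lemma Bm_match q k : 1 < q -> InvK q k -> a k = a q.-1 -> Bm q = k.+1.
Proof.
move=> q1 [[kq [_ Sk]] I] E.
have [[H1 H2] H3] := Bm_spec (ltac:(lia) : 0 < q).
apply/eqP; rewrite eqn_leq; apply/andP; split; last first.
  apply: H3; first lia.
  split; first lia.
  move=> t Ht; case: (ltngtP t k) => Htk.
  - rewrite Sk //; congr (a _); lia.
  - lia.
  - subst t; rewrite E; congr (a _); lia.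
case: (leqP (Bm q) k.+1) => // Hlt.
have [_ S] := H2.
have E' : a (Bm q).-1 = a q.-1.
  rewrite S; last lia. congr (a _); lia.
exfalso; apply: (I (Bm q).-1) E'; try lia.
split; first lia.
move=> t Ht; rewrite S; last lia. congr (a _); lia.
Qed.

Lemma Bm_nomatch q : 1 < q -> InvK q 0 -> a 0 <> a q.-1 -> Bm q = 0.
Proof.
move=> q1 [_ I] N.
have [[H1 H2] H3] := Bm_spec (ltac:(lia) : 0 < q).
case: (posnP (Bm q)) => // Hpos.
have [_ S] := H2.
have E : a (Bm q).-1 = a q.-1.
  rewrite S; last lia. congr (a _); lia.
case: (posnP (Bm q).-1) => H0.
  by rewrite H0 in E.
exfalso; apply: (I (Bm q).-1); try lia.
split; first lia.
move=> t Ht; rewrite S; last lia. congr (a _); lia.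
Qed.

End Math2.

End M2.
Import M2.

Module M3.

Lemma bigmax_wit (m : nat) (P : pred 'I_m) (F : 'I_m -> nat) :
  0 < \max_(i | P i) F i -> exists i0, P i0 /\ \max_(i | P i) F i = F i0.
Proof.
case: (boolP [exists i0, P i0]) => [/existsP[i0 Pi0]|/existsPn N] R0.
  rewrite (bigmax_eq_arg i0) //. case: arg_maxnP => // i Pi _; by exists i.
suff : \max_(i | P i) F i <= 0 by lia.
apply/bigmax_leqP => i Pi; by move: (N i); rewrite Pi.
Qed.

Section Math3.
Variable u : word.
Local Notation n := (size u).
Local Notation a k := (nth 0 u k).
Local Notation occ := (occ u).
Local Notation cov := (cov u).
Local Notation sfx := (sfx u).
Local Notation Bm := (Bm u).
Local Notation Cm := (Cm u).

Definition per i j := forall k, k + j < i -> a k = a (k + j).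
Definition Pm i := i - Bm i.

Lemma Pm_per i : 0 < i -> 0 < Pm i /\ per i (Pm i).
Proof.
move=> i0; have [[H1 [_ H2]] _] := Bm_spec u i0.
split; first by rewrite /Pm; lia.
move=> k Hk; rewrite H2; last by rewrite /Pm in Hk; lia.
congr (a _); rewrite /Pm; lia.
Qed.

Lemma Pm_min i j : 0 < j -> j <= i -> per i j -> Pm i <= j.
Proof.
move=> j0 ji P; rewrite /Pm.
have i0 : 0 < i by lia.
have [_ H] := Bm_spec u i0.
suff : i - j <= Bm i by lia.
apply: H; first lia.
split; first lia.
move=> k Hk; rewrite P; last lia. congr (a _); lia.
Qed.

Lemma per_mod i j : 0 < j -> per i j -> forall k, k < i -> a (k %% j) = a k.
Proof.
move=> j0 P k Hk.
have E : forall d r, r + d * j < i -> a (r + d * j) = a r.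
  elim=> [|d IH] r H; first by rewrite mul0n addn0.
  rewrite (_ : r + d.+1 * j = (r + d * j) + j); last by rewrite mulSn; lia.
  rewrite -P; last lia.
  apply: IH; lia.
rewrite {2}(divn_eq k j) addnC E //; by rewrite addnC -divn_eq.
Qed.

Lemma pref_take c i : c <= i -> i <= n -> prefix (take c u) (take i u).
Proof. move=> ci iN; rewrite prefixE size_takel; last exact: leq_trans ci iN. by rewrite take_takel. Qed.

Lemma ls_from L q i j : 0 < L -> L <= q -> q <= i -> i <= n -> cov L q ->
  0 < j -> j <= q -> per i j -> left_seed (take L u) (take i u).
Proof.
move=> L0 Lq qi iN C j0 jq P.
have Pf : prefix (take L u) (take i u) by apply: pref_take => //; exact: leq_trans Lq qi.
split; last exact: Pf.
split; first exact/prefixW.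
exists (mkseq (fun k => a (k %% j)) (q + i * j)); split.
- move=> p; rewrite size_mkseq => Hp.
  have [r [R1 R2 R3]] : exists r, [/\ r * j <= p, p - r * j < q & r <= i].
    case: (ltnP p q) => H; first by exists 0; rewrite mul0n; split => //; lia.
    have Ed := divn_eq (p - q) j; have He := ltn_pmod (p - q) j0.
    set d := (p - q) %/ j in Ed *; set e := (p - q) %% j in Ed He.
    have di : d < i.
      rewrite -(ltn_pmul2r j0); lia.
    exists d.+1; rewrite mulSn; split; lia.
  have rij : r * j <= i * j by rewrite leq_mul2r R3 orbT.
  case: (C (p - r * j) R2) => j1 [[O1 O2] H1 H2].
  exists (r * j + j1); apply/andP; split; last by rewrite size_takel; lia.
  apply/occurs_atP; rewrite size_takel ?size_mkseq; last lia.
  split; first lia.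
  move=> k Hk; rewrite nth_mkseq; last lia.
  rewrite nth_take // -addnA modnMDl (per_mod j0 P); last lia.
  exact: O2.
- have ij : i <= i * j by rewrite -{1}(muln1 i) leq_mul2l j0 orbT.
  apply: prefixW; rewrite prefixE size_takel //; apply/eqP/(@eq_from_nth _ 0).
    rewrite !size_takel ?size_mkseq //; lia.
  move=> k; rewrite size_takel; last by rewrite size_mkseq; lia.
  move=> Hk; rewrite !nth_take // nth_mkseq; last lia.
  exact: (per_mod j0 P).
Qed.

Lemma ls_to s i : 0 < i -> i <= n -> left_seed s (take i u) ->
  [/\ s = take (size s) u, 0 < size s, size s <= i &
   exists q, [/\ size s <= q, q <= i, cov (size s) q &
     exists j, [/\ 0 < j, j <= q & per i j]]].
Proof.
move=> i0 iN [[_ [w [Cw Ix]]] Px].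
set x := take i u.
have sx : size x = i by rewrite size_takel.
set L := size s; have EL : size s = L by []; clearbody L.
have Li : L <= i by rewrite -sx -EL; exact: size_prefix.
have Es : s = take L u.
  move: Px; rewrite prefixE EL => /eqP <-. by rewrite take_takel.
case/infixP: Ix => w1 [w2 Ew].
pose A := size w1; have EA : size w1 = A by []; clearbody A.
have Wx k : k < i -> nth 0 w (A + k) = a k.
  move=> Hk; rewrite Ew nth_cat EA ltnNge leq_addr /= addKn nth_cat sx Hk.
  by rewrite nth_take.
have sw : A + i <= size w by rewrite Ew !size_cat sx EA; lia.
pose ok t := [&& occurs_at s w t, A <= t & t + L <= A + i].
have okO t : ok t -> occ L (t - A).
  case/and3P => /occurs_atP [H1 H2] H3 H4; rewrite EL in H1 H2; split; first lia.
  move=> k Hk; rewrite -Wx; last lia.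
  rewrite (_ : A + (t - A + k) = t + k); last lia.
  by rewrite H2 // Es nth_take.
have okA : ok A.
  apply/and3P; split; try lia.
  apply/occurs_atP; rewrite EL; split; first lia.
  by move=> k Hk; rewrite Wx ?Es ?nth_take //; lia.
have As : A < size w by lia.
pose Q := \max_(t < size w | ok t) (t + L - A).
have [t0 [okt0 EQ]] : exists t0 : 'I_(size w), ok t0 /\ Q = t0 + L - A.
  apply: bigmax_wit.
  apply: leq_trans (leq_bigmax_cond (Ordinal As) okA) => /=.
  have : 0 < L.
    case: (Cw A As) => t /andP[_ H]; lia.
  lia.
have Qmax t : t < size w -> ok t -> t + L - A <= Q.
  move=> Ht okt; exact: (leq_bigmax_cond (Ordinal Ht) okt).
have L0 : 0 < L by case: (Cw A As) => t /andP[_ H]; lia.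
have [t0A t0i] : A <= t0 /\ t0 + L <= A + i by case/and3P: okt0 => _ -> ->.
split => //.
exists Q; split; try lia.
- move=> p Hp.
  case: (ltnP p L) => HpL.
    exists 0; split; try lia. split; first lia. by [].
  case: (leqP (Q - L) p) => HpQ.
    exists (t0 - A); split; try lia. exact: okO.
  case: (Cw (A + p) ltac:(lia)) => t /andP[Ot Ht].
  have okt : ok t by rewrite /ok Ot; apply/andP; split; lia.
  have := Qmax t ltac:(lia) okt.
  exists (t - A); split; try lia. exact: okO.
- case: (ltnP Q i) => HQi; last first.
    exists i; split; try lia. move=> k Hk; lia.
  case: (Cw (A + Q) ltac:(lia)) => t /andP[Ot Ht].
  have At : A <= t by lia.
  have tL : A + i < t + L.
    case: (leqP (t + L) (A + i)) => // H.
    have okt : ok t by rewrite /ok Ot At H.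
    have := Qmax t ltac:(case/occurs_atP: Ot; lia) okt; lia.
  exists (t - A); split; try lia.
  move=> k Hk.
  case/occurs_atP: Ot => _ H2.
  rewrite -[a (k + (t - A))]Wx; last lia.
  rewrite (_ : A + (k + (t - A)) = t + k); last lia.
  rewrite EL in H2; rewrite H2; last lia.
  by rewrite Es nth_take //; lia.
Qed.

Lemma ls_mono c i i' : c <= i -> i <= i' -> i' <= n ->
  left_seed (take c u) (take i' u) -> left_seed (take c u) (take i u).
Proof.
move=> ci ii' i'n [[_ [w [Cw Ix]]] _].
split; last by apply: pref_take; lia.
split; first by apply/prefixW/pref_take; lia.
exists w; split => //.
apply: prefix_infix_trans Ix; exact: pref_take.
Qed.

Lemma ls_self i : 0 < i -> i <= n -> left_seed (take i u) (take i u).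
Proof.
move=> i0 iN; split; last exact: prefix_refl.
split; first exact: infix_refl.
exists (take i u); split; last exact: infix_refl.
move=> p Hp; exists 0; apply/andP; split; last lia.
by apply/occurs_atP; split.
Qed.

Definition Em q := \max_(i < n.+1 | (0 < i) && (Pm i <= q)) i.
Definition Rm L := \max_(q < n.+1 | (0 < q) && (Cm q <= L)) Em q.

Lemma Em_ge q i : 0 < i -> i <= n -> Pm i <= q -> i <= Em q.
Proof.
move=> i0 iN H; have Hi : i < n.+1 by lia.
have -> : i = Ordinal Hi by [].
by apply: (leq_bigmax_cond (Ordinal Hi)); rewrite /= i0.
Qed.

Theorem lseed_ok i g : 0 < i -> i <= n -> 0 < g -> i <= Rm g ->
  (forall L, 0 < L -> L < g -> Rm L < i) -> is_lseed (take i u) g.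
Proof.
move=> i0 iN g0 HR Hmin.
have Min : forall s, left_seed s (take i u) -> g <= size s.
  move=> s /(ls_to i0 iN) [Es L0 Li [q [Lq qi Cq [j [j0 jq Pj]]]]].
  case: (leqP g (size s)) => // Hlt; exfalso.
  have := Hmin _ L0 Hlt.
  have qn : q <= n by lia.
  have q0 : 0 < q by lia.
  have Hc : Cm q <= size s by apply: (Cm_spec qn).2.
  have HE : i <= Em q.
    apply: Em_ge => //; have := Pm_min j0 (leq_trans jq qi) Pj; lia.
  have Hq : q < n.+1 by lia.
  suff : Em q <= Rm (size s) by lia.
  by apply: (leq_bigmax_cond (Ordinal Hq) (F := fun q : 'I_n.+1 => Em q)); rewrite /= q0.
split => //.
have [q [/andP [q0 Cqg] ERq]] := bigmax_wit (ltac:(lia) : 0 < Rm g).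
have qn : q <= n by have := ltn_ord q; lia.
have [Pq0 Pq] := Pm_per q0.
have Eqq : q <= Em q.
  apply: Em_ge => //; rewrite /Pm; lia.
have [i' [/andP [i'0 Pi'q] Ei']] := bigmax_wit (ltac:(lia) : 0 < Em q).
have i'n : i' <= n by have := ltn_ord i'; lia.
rewrite -/(Rm g) in ERq. rewrite -/(Em q) in Ei'.
have ii' : i <= i' by lia.
have [Cq _] := Cm_spec qn.
have [c0 cq _ _ _] := cov_sfx q0 Cq.
have [Pi'0 Pi'] := Pm_per i'0.
have qi' : q <= i' by lia.
have LS := ls_from c0 cq qi' i'n Cq Pi'0 Pi'q Pi'.
case: (leqP (Cm q) i) => Hci.
  have LSi := ls_mono Hci ii' i'n LS.
  have := Min _ LSi; rewrite size_takel; last lia.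
  move=> gc; exists (take (Cm q) u); split => //; rewrite size_takel; lia.
exfalso; have := Min _ (ls_self i0 iN); rewrite size_takel //; lia.
Qed.

End Math3.

End M3.
Import M3.

Module R1.

Definition prog : seq instr := [::
 (*0*) IJz 0 92; IConst 1 1; IAdd 9 0 1; IAdd 10 9 9; IAdd 11 10 9;
 (*5*) IAdd 12 11 9; IAdd 13 12 9; IAdd 14 13 9; IAdd 4 11 1; IStore 4 1;
 (*10*) IAdd 4 12 1; IStore 4 1; IAdd 4 13 1; IStore 4 1; IConst 2 2;
 (*15*) ISub 7 2 0; IJz 7 18; IJmp 52; ISub 5 2 1; ILoad 6 5;
 (*20*) IAdd 4 10 5; ILoad 3 4; ILoad 7 3; ISub 8 7 6; ISub 15 6 7;
 (*25*) IAdd 8 8 15; IJz 8 31; IJz 3 32; IAdd 4 10 3; ILoad 3 4;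
 (*30*) IJmp 22; IAdd 3 3 1; IAdd 4 10 2; IStore 4 3; IJz 3 42;
 (*35*) IAdd 4 11 3; ILoad 5 4; IAdd 4 12 5; ILoad 7 4; ISub 8 2 5;
 (*40*) ISub 8 8 7; IJz 8 43; IAdd 5 2 16; IAdd 4 11 2; IStore 4 5;
 (*45*) IAdd 4 12 5; IStore 4 2; ISub 7 2 3; IAdd 4 13 7; IStore 4 2;
 (*50*) IAdd 2 2 1; IJmp 15; IConst 2 1; IConst 15 0; ISub 7 2 0;
 (*55*) IJz 7 57; IJmp 71; IAdd 4 13 2; ILoad 7 4; ISub 8 7 15;
 (*60*) IJz 8 62; IAdd 15 7 16; IAdd 4 11 2; ILoad 5 4; IAdd 4 14 5;
 (*65*) ILoad 7 4; ISub 8 15 7; IJz 8 69; IStore 4 15; IAdd 2 2 1;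
 (*70*) IJmp 54; IConst 2 1; IConst 3 1; IAdd 4 14 1; ILoad 15 4;
 (*75*) ISub 7 2 0; IJz 7 78; IJmp 92; ISub 8 2 15; IJz 8 87;
 (*80*) IAdd 3 3 1; IAdd 4 14 3; ILoad 7 4; ISub 8 7 15; IJz 8 78;
 (*85*) IAdd 15 7 16; IJmp 78; IAdd 4 0 2; ISub 4 4 1; IStore 4 3;
 (*90*) IAdd 2 2 1; IJmp 75; IHalt].

Definition reaches (P : state -> Prop) (st : state) (T : nat) :=
  exists t, t <= T /\ P (exec prog t st).

Lemma reaches_now P st T : P st -> reaches P st T.
Proof. by move=> H; exists 0. Qed.

Lemma reaches_step P st T : reaches P (step prog st) T -> reaches P st T.+1.
Proof. by case=> t [H1 H2]; exists t.+1; split => //; rewrite /exec iterSr. Qed.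

Lemma reaches_mono P st T T' : T <= T' -> reaches P st T -> reaches P st T'.
Proof. by move=> H [t [H1 H2]]; exists t; split => //; apply: leq_trans H. Qed.

Lemma reaches_trans (Q P : state -> Prop) st T1 T2 :
  reaches Q st T1 -> (forall st', Q st' -> reaches P st' T2) -> reaches P st (T1 + T2).
Proof.
case=> t1 [H1 H2] K; case: (K _ H2) => t2 [H3 H4].
exists (t2 + t1); split; first by rewrite addnC leq_add.
by rewrite /exec iterD.
Qed.

Lemma reaches_weak (Q P : state -> Prop) st T :
  (forall s, Q s -> P s) -> reaches Q st T -> reaches P st T.
Proof. by move=> H [t [H1 H2]]; exists t; split => //; apply: H. Qed.

Lemma updE f x v y : upd f x v y = if y == x then v else f y.
Proof. by []. Qed.

Lemma reaches_step' P st T : reaches P (step prog st) T.-1 -> 0 < T -> reaches P st T.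
Proof. by case: T => // T H _; apply: reaches_step. Qed.

Ltac stp := apply: reaches_step'; last lia; rewrite /step /prog /= ?updE /=.


End R1.
Import R1.

Module R2.

Section Layout.
Variable u : word.
Local Notation n := (size u).
Local Notation a k := (nth 0 u k).

Definition memF (F : nat -> nat -> nat) (fO : nat -> nat) (y : nat) : nat :=
  if y < n then a y
  else if y < n + n then fO (y - n)
  else if y < 2 * n.+1 then 0
  else if (2 <= y %/ n.+1 <= 6) then F (y %/ n.+1) (y %% n.+1) else 0.

Definition updF (F : nat -> nat -> nat) K x v :=
  fun k i => if (k == K) && (i == x) then v else F k i.

Lemma blk_div K x : x <= n -> (K * n.+1 + x) %/ n.+1 = K /\ (K * n.+1 + x) %% n.+1 = x.
Proof.
move=> xn; rewrite divnMDl // modnMDl divn_small ?modn_small; try lia.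
Qed.

Lemma memF_in F fO y : y < n -> memF F fO y = a y.
Proof. by rewrite /memF => ->. Qed.

Lemma memF_blk F fO K x : 2 <= K <= 6 -> x <= n -> memF F fO (K * n.+1 + x) = F K x.
Proof.
move=> HK xn; have [E1 E2] := blk_div K xn.
rewrite /memF E1 E2 HK.
have H : 2 * n.+1 <= K * n.+1 by rewrite leq_mul2r; case/andP: HK => -> _; rewrite orbT.
rewrite ifF; last lia. rewrite ifF; last lia. rewrite ifF //; lia.
Qed.

Lemma memF_ext F G fO y : (forall k i, 2 <= k <= 6 -> i <= n -> F k i = G k i) ->
  memF F fO y = memF G fO y.
Proof.
move=> H; rewrite /memF; case: ifP => // _; case: ifP => // _; case: ifP => // _.
case: ifP => // HK; apply: H => //.
have := ltn_pmod y (ltn0Sn n); lia.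
Qed.

Lemma memF_store F fO K x v y : 2 <= K <= 6 -> x <= n ->
  (if y == K * n.+1 + x then v else memF F fO y) = memF (updF F K x v) fO y.
Proof.
move=> HK xn; case: eqP => [->|Ne].
  by rewrite memF_blk // /updF !eqxx.
rewrite /memF; case: ifP => // _; case: ifP => // _; case: ifP => // _.
case: ifP => // HK'; rewrite /updF.
case: eqP => // Ek; case: eqP => //= Ex; exfalso; apply: Ne.
by rewrite {1}(divn_eq y n.+1) Ek Ex.
Qed.

Lemma memF_out F fO i v y : i < n ->
  (if y == n + i then v else memF F fO y) = memF F (upd fO i v) y.
Proof.
move=> iN; case: eqP => [->|Ne].
  rewrite /memF ifF; last lia. rewrite ifT; last lia.
  by rewrite /upd addKn eqxx.
rewrite /memF; case: ifP => // H1; case: ifP => // H2.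
rewrite /upd; case: eqP => // E; exfalso; apply: Ne; lia.
Qed.

End Layout.

End R2.
Import R2.

Module R3.

Section Specs.
Variable u : word.
Local Notation n := (size u).
Local Notation a k := (nth 0 u k).
Local Notation Bm := (Bm u).
Local Notation Cm := (Cm u).
Local Notation Pm := (Pm u).
Local Notation Em := (Em u).
Local Notation Rm := (Rm u).
Local Notation Rng := (Rng u).

Definition B1 q x := if (0 < x) && (x < q) then Bm x else 0.
Definition C1 q x := if (0 < x) && (x < q) then Cm x else 0.
Definition Tm q p := \max_(i < q | (0 < i) && (Pm i == p)) i.
Definition Am q c := \max_(q' < q | (0 < q') && (Cm q' == c)) Em q'.

Definition Fs qB qC qR qT qA : nat -> nat -> nat := fun k x =>
  match k with 2 => B1 qB x | 3 => C1 qC x | 4 => Rng qR x | 5 => Tm qT x | 6 => Am qA x | _ => 0 end.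

Lemma Cm_pos q : 0 < q -> q <= n -> 0 < Cm q /\ Cm q <= q.
Proof.
move=> q0 qn; have [C _] := Cm_spec qn.
by have [H1 H2 _ _ _] := cov_sfx q0 C.
Qed.

Lemma Cm0 : Cm 0 = 0.
Proof.
have [_ H] := Cm_spec (leq0n n).
have : Cm 0 <= 0 by apply: H => p; rewrite ltn0.
lia.
Qed.

Lemma Bm1 : Bm 1 = 0.
Proof. have [[H _] _] := Bm_spec u (ltn0Sn 0); lia. Qed.

Lemma Bm_lt q : 0 < q -> Bm q < q.
Proof. by move=> q0; have [[H _] _] := Bm_spec u q0. Qed.

Lemma Cm1 : 0 < n -> Cm 1 = 1.
Proof. move=> n0; have := Cm_pos (ltn0Sn 0) n0; lia. Qed.

Lemma Pm_pos i : 0 < i -> 0 < Pm i /\ Pm i <= i.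
Proof. move=> i0; have := Bm_lt i0; rewrite /M3.Pm; lia. Qed.

Lemma Rng_S q c : Rng q.+1 c = if Cm q == c then q else Rng q c.
Proof.
rewrite /M2.Rng (big_mkcond (fun i : 'I_q.+1 => Cm i == c)) big_ord_recr /=.
rewrite -(big_mkcond (fun i : 'I_q => Cm i == c)).
case: eqP => _; last by rewrite maxn0.
apply/maxn_idPr/bigmax_leqP => i _; exact: ltnW.
Qed.

Lemma Tm_S q p : 0 < q -> Tm q.+1 p = if Pm q == p then q else Tm q p.
Proof.
move=> q0.
rewrite /Tm (big_mkcond (fun i : 'I_q.+1 => (0 < i) && (Pm i == p))) big_ord_recr /=.
rewrite -(big_mkcond (fun i : 'I_q => (0 < i) && (Pm i == p))) q0 /=.
case: eqP => _; last by rewrite maxn0.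
apply/maxn_idPr/bigmax_leqP => i _; exact: ltnW.
Qed.

Lemma Am_S q c : 0 < q -> Am q.+1 c = if Cm q == c then maxn (Am q c) (Em q) else Am q c.
Proof.
move=> q0.
rewrite /Am (big_mkcond (fun i : 'I_q.+1 => (0 < i) && (Cm i == c))) big_ord_recr /=.
rewrite -(big_mkcond (fun i : 'I_q => (0 < i) && (Cm i == c))) q0 /=.
by case: eqP => _; last by rewrite maxn0.
Qed.

Lemma Am1 c : Am 1 c = 0.
Proof. rewrite /Am big_pred0 // => i; by case: i => [[|]]. Qed.

Lemma Em0 : Em 0 = 0.
Proof.
apply/eqP; rewrite -leqn0; apply/bigmax_leqP => i /andP[i0 H].
have := Pm_pos i0; lia.
Qed.

Lemma Em_S q : 0 < q -> Em q = maxn (Em q.-1) (Tm n.+1 q).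
Proof.
move=> q0; rewrite /M3.Em (bigID (fun i : 'I_n.+1 => Pm i <= q.-1)) /=.
by congr maxn; apply: eq_bigl => i /=; apply/idP/idP => H; lia.
Qed.

Lemma Rm_S L : Rm L.+1 = maxn (Rm L) (Am n.+1 L.+1).
Proof.
rewrite /M3.Rm (bigID (fun q : 'I_n.+1 => Cm q <= L)) /=.
by congr maxn; apply: eq_bigl => i /=; apply/idP/idP => H; lia.
Qed.

Lemma Rm0 : Rm 0 = 0.
Proof.
apply/eqP; rewrite -leqn0; apply/bigmax_leqP => i /andP[i0 H].
have := Cm_pos i0 (ltnSE (ltn_ord i)); lia.
Qed.

Lemma Rm_ge L : 0 < L -> L <= n -> L <= Rm L.
Proof.
move=> L0 Ln; have HL : L < n.+1 by lia.
have [_ CL] := Cm_pos L0 Ln.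
have : L <= Em L by apply: Em_ge => //; have := Pm_pos L0; lia.
move=> H; apply: leq_trans H _.
by apply: (leq_bigmax_cond (Ordinal HL) (F := fun q : 'I_n.+1 => Em q)); rewrite /= L0.
Qed.

Lemma Em_le q : Em q <= n.
Proof. apply/bigmax_leqP => i _; exact: (ltnSE (ltn_ord i)). Qed.

Lemma Am_le q c : Am q c <= n.
Proof. apply/bigmax_leqP => i _; exact: Em_le. Qed.

Lemma Em_mono q : Em q.-1 <= Em q.
Proof.
apply/bigmax_leqP => i /andP [i0 H].
apply: (leq_bigmax_cond i (F := fun i : 'I_n.+1 => nat_of_ord i)); rewrite i0; lia.
Qed.

Lemma Tm_le q p : Tm q p < q \/ q = 0.
Proof.
case: q => [|q]; [by right|left]. rewrite ltnS.
apply/bigmax_leqP => i _; exact: (ltnSE (ltn_ord i)).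
Qed.

End Specs.

End R3.
Import R3.

Module R4.

Section Loop1.
Variable u : word.
Local Notation n := (size u).
Local Notation a k := (nth 0 u k).
Local Notation Bm := (Bm u).
Local Notation Cm := (Cm u).
Local Notation Pm := (Pm u).
Local Notation Rng := (Rng u).
Local Notation memF := (memF u).
Local Notation Fs := (Fs u).

Definition baseR (R : nat -> nat) := R 0 = n /\ R 1 = 1 /\ R 9 = n.+1 /\ R 10 = 2 * n.+1 /\
  R 11 = 3 * n.+1 /\ R 12 = 4 * n.+1 /\ R 13 = 5 * n.+1 /\ R 14 = 6 * n.+1 /\ R 16 = 0.

Lemma baseR_upd R r v : baseR R -> r \notin [:: 0; 1; 9; 10; 11; 12; 13; 14; 16] -> baseR (upd R r v).
Proof.
move=> [H0 [H1 [H9 [H10 [H11 [H12 [H13 [H14 H16]]]]]]]].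
rewrite !inE => Hr; rewrite /baseR !updE.
by repeat case: eqP => [E|_]; subst; rewrite ?eqxx ?orbT // in Hr.
Qed.

Definition memI (M : nat -> nat) F fO := forall y, M y = memF F fO y.

Lemma memI_store M F fO K x v : memI M F fO -> 2 <= K <= 6 -> x <= n ->
  memI (upd M (K * n.+1 + x) v) (updF F K x v) fO.
Proof. by move=> H HK xn y; rewrite updE H memF_store. Qed.

Lemma memI_out M F fO i v : memI M F fO -> i < n -> memI (upd M (n + i) v) F (upd fO i v).
Proof. by move=> H iN y; rewrite updE H memF_out. Qed.

Lemma memI_ext M F G fO : memI M F fO -> (forall k i, 2 <= k <= 6 -> i <= n -> F k i = G k i) -> memI M G fO.
Proof. by move=> H E y; rewrite H; apply: memF_ext. Qed.

Lemma memI_blk M F fO K x : memI M F fO -> 2 <= K <= 6 -> x <= n -> M (K * n.+1 + x) = F K x.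
Proof. by move=> H HK xn; rewrite H memF_blk. Qed.

Lemma memI_in M F fO y : memI M F fO -> y < n -> M y = a y.
Proof. by move=> H yn; rewrite H memF_in. Qed.

Lemma inner1_bound q k : 1 < q -> InvK u q k -> Bm q <= k.+1.
Proof.
move=> q1; elim/ltn_ind: k => k IH IK.
case: (a k =P a q.-1) => E; first by rewrite (Bm_match q1 IK E).
case: (posnP k) => k0.
  by subst k; rewrite (Bm_nomatch q1 IK E).
have := IH (Bm k) (Bm_lt u k0) (InvK_step q1 IK k0 E).
have := Bm_lt u k0; lia.
Qed.

Ltac rwR := repeat match goal with H : ?R ?x = _ |- context [?R ?x] => is_var R; rewrite H end.
Ltac base := repeat (apply: baseR_upd; last done).
Ltac dbase HR := case: HR => H0 [H1 [H9 [H10 [H11 [H12 [H13 [H14 H16]]]]]]].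

(* inner KMP loop at pc 22 *)
Lemma inner1 q k R M T : 1 < q -> q <= n -> baseR R -> R 2 = q -> R 6 = a q.-1 -> R 3 = k ->
  InvK u q k -> memI M (Fs q q q q 1) (fun _ => 0) ->
  9 * (k.+1 - Bm q) + 6 <= T ->
  reaches (fun st => [/\ pc st = 32, baseR (regs st), regs st 2 = q, regs st 3 = Bm q &
     memI (memory st) (Fs q q q q 1) (fun _ => 0)]) (State 22 R M) T.
Proof.
move=> q1 qn; elim/ltn_ind: k R T => k IH R T HR H2 H6 H3 IK HM HT.
have [[kq _] _] := IK.
have kn : k < n by lia.
have HR' := HR; dbase HR'.
stp. rwR. rewrite (memI_in HM kn).
stp. stp. stp. stp. rwR.
case: (a k =P a q.-1) => E.
  rewrite E subnn /=. have EB := Bm_match q1 IK E.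
  stp. rwR. apply: reaches_now; split => //=; rewrite ?updE /=; rwR; try lia.
  all: try by base.
rewrite ifF /=; last by apply/eqP; lia.
stp. rwR. case: (posnP k) => k0.
  have EB : Bm q = 0 by rewrite k0 in IK E; exact: Bm_nomatch q1 IK E.
  apply: reaches_now; split => //=; rewrite ?updE /=; rwR; try lia.
  all: try by base.
have Bk := Bm_lt u k0.
have Bq := inner1_bound q1 (InvK_step q1 IK k0 E).
have EBk : B1 u q k = Bm k by rewrite /B1 ifT //; apply/andP; lia.
stp. stp. rwR. rewrite (memI_blk HM) //=; last lia. rewrite EBk.
stp.
apply: (IH (Bm k) Bk) => //=; rewrite ?updE /=; rwR; try lia.
all: try by base.
all: try exact: InvK_step.
Qed.


Ltac fsx := let k := fresh "k" in let i := fresh "i" in move=> k i _ _;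
  rewrite /updF /Fs; case: k => [|[|[|[|[|[|[|k]]]]]]] //=.

Lemma extB q qC qR qT qA : 0 < q -> forall k i, 2 <= k <= 6 -> i <= n ->
  updF (Fs q qC qR qT qA) 2 q (Bm q) k i = Fs q.+1 qC qR qT qA k i.
Proof.
move=> q0; fsx. rewrite /B1; case: eqP => [->|Ne]; first by rewrite q0 ltnSn.
case: ifP; case: ifP => //; lia.
Qed.

Lemma extC q qB qR qT qA : 0 < q -> forall k i, 2 <= k <= 6 -> i <= n ->
  updF (Fs qB q qR qT qA) 3 q (Cm q) k i = Fs qB q.+1 qR qT qA k i.
Proof.
move=> q0; fsx. rewrite /C1; case: eqP => [->|Ne]; first by rewrite q0 ltnSn.
case: ifP; case: ifP => //; lia.
Qed.

Lemma extR q qB qC qT qA : forall k i, 2 <= k <= 6 -> i <= n ->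
  updF (Fs qB qC q qT qA) 4 (Cm q) q k i = Fs qB qC q.+1 qT qA k i.
Proof.
fsx. rewrite Rng_S; case: eqP => [->|Ne]; first by rewrite eqxx.
by case: eqP => // E; rewrite E in Ne.
Qed.

Lemma extT q qB qC qR qA : 0 < q -> forall k i, 2 <= k <= 6 -> i <= n ->
  updF (Fs qB qC qR q qA) 5 (Pm q) q k i = Fs qB qC qR q.+1 qA k i.
Proof.
move=> q0; fsx. rewrite Tm_S //; case: eqP => [->|Ne]; first by rewrite eqxx.
by case: eqP => // E; rewrite E in Ne.
Qed.

Definition Inv1 q st := [/\ pc st = 15, 1 < q <= n.+1, baseR (regs st), regs st 2 = q &
  memI (memory st) (Fs q q q q 1) (fun _ => 0)].

Definition Q43 q st := pc st = 43 /\ baseR (regs st) /\ regs st 2 = q /\ regs st 3 = Bm q /\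
  regs st 5 = Cm q /\ memI (memory st) (Fs q.+1 q q q 1) (fun _ => 0).

Lemma segB q R M : 1 < q -> q <= n -> baseR R -> R 2 = q -> R 3 = Bm q ->
  memI M (Fs q q q q 1) (fun _ => 0) -> reaches (Q43 q) (State 32 R M) 13.
Proof.
move=> q1 qn HR H2 H3 HM.
have HR' := HR; dbase HR'.
have q0 : 0 < q by lia.
have Bq := Bm_lt u q0.
have HM' := memI_ext (memI_store (K:=2) (Bm q) HM isT qn) (extB q q q 1 q0).
have Erec := Cm_rec q0 qn.
stp. stp. rwR. set M1 := upd M _ _ in HM' *; clearbody M1. stp. rwR.
case: (posnP (Bm q)) => b0.
  rewrite b0 /= in Erec.
  stp. rwR. apply: reaches_now; repeat split => //=; rewrite ?updE /=; rwR; try lia.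
have bn : Bm q <= n by lia.
have [c0 cb] := Cm_pos b0 bn.
stp. stp. rwR. rewrite (memI_blk HM') //; try lia. rewrite /=.
rewrite /C1 ifT; last by apply/andP; lia.
stp. stp. rwR. rewrite (memI_blk HM') //; try lia. rewrite /=.
stp. stp. stp. rwR. rewrite b0 /= in Erec.
case: (leqP (q - Cm (Bm q)) (Rng q (Cm (Bm q)))) => HRg.
  rewrite HRg in Erec; rewrite ifT /=; last lia.
  apply: reaches_now; repeat split => //=; rewrite ?updE /=; rwR; try lia.
rewrite leqNgt HRg /= in Erec; rewrite ifF /=; last lia.
stp. rwR. apply: reaches_now; repeat split => //=; rewrite ?updE /=; rwR; try lia.
Qed.

Lemma segC q R M : 1 < q -> q <= n -> baseR R -> R 2 = q -> R 3 = Bm q -> R 5 = Cm q ->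
  memI M (Fs q.+1 q q q 1) (fun _ => 0) -> reaches (Inv1 q.+1) (State 43 R M) 9.
Proof.
move=> q1 qn HR H2 H3 H5 HM.
have HR' := HR; dbase HR'.
have q0 : 0 < q by lia.
have Bq := Bm_lt u q0.
have [c0 cq] := Cm_pos q0 qn.
have HM1 := memI_ext (memI_store (K:=3) (Cm q) HM isT qn) (extC q.+1 q q 1 q0).
have HM2 := memI_ext (memI_store (K:=4) q HM1 isT (leq_trans cq qn)) (extR q q.+1 q.+1 q 1).
have Pn : Pm q <= n by rewrite /M3.Pm; lia.
have HM3 := memI_ext (memI_store (K:=5) q HM2 isT Pn) (extT q.+1 q.+1 q.+1 1 q0).
stp. stp. rwR. stp. stp. rwR. stp. stp. stp. rwR. stp. stp. rwR.
apply: reaches_now; repeat split => //=; rewrite ?updE /=; rwR; try lia.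
Qed.

Lemma iter1 q st : Inv1 q st -> q <= n -> reaches (Inv1 q.+1) st (45 + 9 * Bm q.-1 - 9 * Bm q).
Proof.
case: st => p R M [/= Hp /andP[q1 _] HR H2 HM] qn; subst p.
have HR' := HR; dbase HR'.
have q0 : 0 < q by lia.
have IK := InvK_init u q1.
have Bb := inner1_bound q1 IK.
have Bq1 : Bm q.-1 < q.-1 by apply: Bm_lt; lia.
have E1 : q - 1 = q.-1 by lia.
have EB : B1 u q q.-1 = Bm q.-1 by rewrite /B1 ifT //; apply/andP; lia.
apply: (@reaches_mono _ _ (6 + ((9 * ((Bm q.-1).+1 - Bm q) + 6) + (13 + 9)))); first lia.
stp. stp. rwR. have -> : (q - n == 0) = true by apply/eqP; lia.
have Hq1 : q.-1 < n by lia.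
stp. stp. rwR. rewrite E1 (memI_in HM Hq1).
have Hq2 : q.-1 <= n by lia.
stp. stp. rwR. rewrite (memI_blk (K:=2) HM isT Hq2) /= EB.
rewrite add0n.
apply: reaches_trans.
  apply: (inner1 (q:=q) (k:=Bm q.-1)) => //=; rewrite ?updE /=; rwR; try lia.
move=> [p2 R2 M2] [/= Hp2 HR2 H22 H23 HM2]; subst p2.
apply: reaches_trans; first by apply: (segB (q:=q)).
move=> [p3 R3 M3] [/= Hp3 [HR3 [H32 [H33 [H35 HM3]]]]]; subst p3.
by apply: (segC (q:=q)).
Qed.

Definition Post1 st := pc st = 52 /\ baseR (regs st) /\
  memI (memory st) (Fs n.+1 n.+1 n.+1 n.+1 1) (fun _ => 0).

Lemma loop1 m q st : n.+1 - q = m -> Inv1 q st ->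
  reaches Post1 st (45 * (n.+1 - q) + 9 * Bm q.-1 + 3).
Proof.
elim: m q st => [|m IH] q st Hm HI.
  case: st HI => p R M [/= Hp /andP[q1 qn] HR H2 HM]; subst p.
  have HR' := HR; dbase HR'.
  have Eq : q = n.+1 by lia.
  rewrite Eq subnn.
  stp. stp. rwR. have -> : (q - n == 0) = false by apply/eqP; lia.
  stp. apply: reaches_now; repeat split => //=; rewrite ?updE /=; rwR; try lia.
  all: try by rewrite -Eq.
have qn : q <= n by case: HI => _ /andP[]; lia.
have q1 : 1 < q by case: HI => _ /andP[].
have Bb := inner1_bound q1 (InvK_init u q1).
apply: reaches_mono; last first.
  apply: reaches_trans; first exact: (iter1 HI qn).
  move=> st' H'; apply: IH H'; lia.
rewrite /=; lia.
Qed.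

End Loop1.

End R4.
Import R4.

Module R5.

Ltac rwR := repeat match goal with H : ?R ?x = _ |- context [?R ?x] => is_var R; rewrite H end.
Ltac dbase HR := case: HR => H0 [H1 [H9 [H10 [H11 [H12 [H13 [H14 H16]]]]]]].
Ltac fsx := let k := fresh "k" in let i := fresh "i" in move=> k i _ _;
  rewrite /updF /Fs; case: k => [|[|[|[|[|[|[|k]]]]]]] //=.

Section Loop2.
Variable u : word.
Local Notation n := (size u).
Local Notation a k := (nth 0 u k).
Local Notation Bm := (Bm u).
Local Notation Cm := (Cm u).
Local Notation Pm := (Pm u).
Local Notation Em := (Em u).
Local Notation Rm := (Rm u).
Local Notation Am := (Am u).
Local Notation Tm := (Tm u).
Local Notation Rng := (Rng u).
Local Notation memF := (memF u).
Local Notation Fs := (Fs u).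
Local Notation memI := (memI u).
Local Notation baseR := (baseR u).

Lemma memI_store' M F fO K x v addr : memI M F fO -> addr = K * n.+1 + x -> 2 <= K <= 6 -> x <= n ->
  memI (upd M addr v) (updF F K x v) fO.
Proof. by move=> H -> HK xn; apply: memI_store. Qed.

Lemma extA1 q : 0 < q -> Em q <= Am q (Cm q) -> forall k i, 2 <= k <= 6 -> i <= n ->
  Fs n.+1 n.+1 n.+1 n.+1 q k i = Fs n.+1 n.+1 n.+1 n.+1 q.+1 k i.
Proof.
move=> q0 H; fsx. rewrite Am_S //; case: eqP => // <-.
by apply/esym/maxn_idPl.
Qed.

Lemma extA2 q : 0 < q -> Am q (Cm q) < Em q -> forall k i, 2 <= k <= 6 -> i <= n ->
  updF (Fs n.+1 n.+1 n.+1 n.+1 q) 6 (Cm q) (Em q) k i = Fs n.+1 n.+1 n.+1 n.+1 q.+1 k i.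
Proof.
move=> q0 H; fsx. rewrite Am_S //; case: eqP => [->|Ne]; rewrite ?eqxx.
  by apply/esym/maxn_idPr/ltnW.
by case: eqP => // E; rewrite E in Ne.
Qed.

Definition Inv2 q st := pc st = 54 /\ 0 < q <= n.+1 /\ baseR (regs st) /\ regs st 2 = q /\
  regs st 15 = Em q.-1 /\ memI (memory st) (Fs n.+1 n.+1 n.+1 n.+1 q) (fun _ => 0).

Definition Q62 q st := pc st = 62 /\ baseR (regs st) /\ regs st 2 = q /\
  regs st 15 = Em q /\ memI (memory st) (Fs n.+1 n.+1 n.+1 n.+1 q) (fun _ => 0).

Lemma seg2a q st : Inv2 q st -> q <= n -> reaches (Q62 q) st 7.
Proof.
case: st => p R M [/= Hp [/andP[q0 _] [HR [H2 [H15 HM]]]]] qn; subst p.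
have HR' := HR; dbase HR'.
have ES := Em_S u q0.
stp. stp. rwR. have -> : (q - n == 0) = true by apply/eqP; lia.
stp. stp. rwR. rewrite (memI_blk (K:=5) HM isT qn) /=.
stp. stp. rwR.
case: (leqP (Tm n.+1 q) (Em q.-1)) => HT.
  rewrite ifT /=; last lia.
  apply: reaches_now; repeat split => //=; rewrite ?updE /=; rwR; try lia.
rewrite ifF /=; last lia.
stp. rwR. apply: reaches_now; repeat split => //=; rewrite ?updE /=; rwR; try lia.
Qed.

Lemma seg2b q st : Q62 q st -> 0 < q -> q <= n -> reaches (Inv2 q.+1) st 9.
Proof.
case: st => p R M [/= Hp [HR [H2 [H15 HM]]]] q0 qn; subst p.
have HR' := HR; dbase HR'.
have [c0 cq] := Cm_pos q0 qn.
have cn : Cm q <= n by lia.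
have EC : C1 u n.+1 q = Cm q by rewrite /C1 ifT //; apply/andP; lia.
stp. stp. rwR. rewrite (memI_blk (K:=3) HM isT qn) /= EC.
stp. stp. rwR. rewrite (memI_blk (K:=6) HM isT cn) /=.
stp. stp. rwR.
case: (leqP (Em q) (Am q (Cm q))) => HA.
  rewrite ifT /=; last lia.
  stp. stp. rwR. apply: reaches_now; repeat split => //=; rewrite ?updE /=; rwR; try lia.
  exact: memI_ext HM (extA1 q0 HA).
rewrite ifF /=; last lia.
stp. stp. stp. rwR. apply: reaches_now; repeat split => //=; rewrite ?updE /=; rwR; try lia.
exact: memI_ext (memI_store (K:=6) (Em q) HM isT cn) (extA2 q0 HA).
Qed.

Definition Post2 st := pc st = 71 /\ baseR (regs st) /\
  memI (memory st) (Fs n.+1 n.+1 n.+1 n.+1 n.+1) (fun _ => 0).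

Lemma loop2 m q st : n.+1 - q = m -> Inv2 q st -> reaches Post2 st (16 * (n.+1 - q) + 3).
Proof.
elim: m q st => [|m IH] q st Hm HI.
  case: st HI => p R M [/= Hp [/andP[q0 qn] [HR [H2 [H15 HM]]]]]; subst p.
  have HR' := HR; dbase HR'.
  have Eq : q = n.+1 by lia.
  rewrite Eq subnn.
  stp. stp. rwR. have -> : (q - n == 0) = false by apply/eqP; lia.
  stp. apply: reaches_now; repeat split => //=; rewrite ?updE /=; rwR; try lia.
  all: try by rewrite Eq in HM.
have qn : q <= n by case: HI => _ [/andP[]]; lia.
have q0 : 0 < q by case: HI => _ [/andP[]].
apply: (@reaches_mono _ _ (7 + (9 + (16 * (n.+1 - q.+1) + 3)))); first lia.
apply: reaches_trans; first exact: (seg2a HI qn).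
move=> st1 H1; apply: reaches_trans; first exact: (seg2b H1 q0 qn).
move=> st2 H2; apply: IH H2; lia.
Qed.

End Loop2.

End R5.
Import R5.

Module R6.

Ltac rwR := repeat match goal with H : ?R ?x = _ |- context [?R ?x] => is_var R; rewrite H end.
Ltac dbase HR := case: HR => H0 [H1 [H9 [H10 [H11 [H12 [H13 [H14 H16]]]]]]].

Section Loop3.
Variable u : word.
Local Notation n := (size u).
Local Notation a k := (nth 0 u k).
Local Notation Bm := (Bm u).
Local Notation Cm := (Cm u).
Local Notation Rm := (Rm u).
Local Notation Am := (Am u).
Local Notation memF := (memF u).
Local Notation Fs := (Fs u).
Local Notation memI := (memI u).
Local Notation baseR := (baseR u).
Local Notation F3 := (Fs n.+1 n.+1 n.+1 n.+1 n.+1).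

Lemma memI_out' M F fO i v addr : memI M F fO -> addr = n + i -> i < n ->
  memI (upd M addr v) F (upd fO i v).
Proof. by move=> H -> iN; apply: memI_out. Qed.

Definition Inv78 i L st := pc st = 78 /\ 0 < i <= n /\ 0 < L <= n /\ baseR (regs st) /\
  regs st 2 = i /\ regs st 3 = L /\ regs st 15 = Rm L /\
  (forall L', 0 < L' -> L' < L -> Rm L' < i) /\
  exists fO, memI (memory st) F3 fO /\ forall x, x.+1 < i -> is_lseed (take x.+1 u) (fO x).

Definition Final st := halted prog st /\
  forall x, x < n -> is_lseed (take x.+1 u) (memory st (n + x)).

Lemma memF_outv F fO x : x < n -> memF F fO (n + x) = fO x.
Proof. move=> xn; rewrite /memF ifF; last lia. rewrite ifT; last lia. by rewrite addKn. Qed.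

Lemma step3a i L st : Inv78 i L st -> Rm L < i -> reaches (Inv78 i L.+1) st 9.
Proof.
case: st => p R M [/= Hp [/andP[i0 iN] [/andP[L0 Ln] [HR [H2 [H3 [H15 [Hlt [fO [HM HO]]]]]]]]]] HL; subst p.
have HR' := HR; dbase HR'.
have RL := Rm_ge L0 Ln.
have L1n : L.+1 <= n by lia.
have ES := Rm_S u L.
stp. stp. rwR. rewrite ifF /=; last lia.
stp. stp. stp. rwR. rewrite (_ : L + 1 = L.+1); last lia.
rewrite (memI_blk (K:=6) HM isT L1n) /=.
stp. stp. rwR.
case: (leqP (Am n.+1 L.+1) (Rm L)) => HA.
  rewrite ifT /=; last lia.
  apply: reaches_now; repeat split => //=; rewrite ?updE /=; rwR; try lia.
  - move=> L' L'0 L'L; case: (ltngtP L' L) => HL'; [exact: Hlt|lia|subst; lia].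
  - by exists fO.
rewrite ifF /=; last lia.
stp. stp. apply: reaches_now; repeat split => //=; rewrite ?updE /=; rwR; try lia.
- move=> L' L'0 L'L; case: (ltngtP L' L) => HL'; [exact: Hlt|lia|subst; lia].
- by exists fO.
Qed.

Lemma step3b i L st : Inv78 i L st -> i <= Rm L -> i < n -> reaches (Inv78 i.+1 L) st 9.
Proof.
case: st => p R M [/= Hp [/andP[i0 iN] [/andP[L0 Ln] [HR [H2 [H3 [H15 [Hlt [fO [HM HO]]]]]]]]]] HL iltn; subst p.
have HR' := HR; dbase HR'.
have LS := lseed_ok i0 iN L0 HL Hlt.
stp. stp. rwR. rewrite ifT /=; last lia.
stp. stp. stp. rwR.
have HM' := memI_out' L HM (_ : n + i - 1 = n + i.-1) (_ : i.-1 < n).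
stp. stp. stp. stp. rwR.
rewrite ifT /=; last lia.
apply: reaches_now; repeat split => //=; rewrite ?updE /=; rwR; try lia.
- move=> L' L'0 L'L; have := Hlt L' L'0 L'L; lia.
- exists (upd fO i.-1 L); split; first by apply: HM'; lia.
  move=> x xi; rewrite /upd; case: eqP => [->|Ne].
    by rewrite prednK.
  apply: HO; lia.
Qed.

Lemma step3c i L st : Inv78 i L st -> i <= Rm L -> i = n -> reaches Final st 10.
Proof.
case: st => p R M [/= Hp [/andP[i0 iN] [/andP[L0 Ln] [HR [H2 [H3 [H15 [Hlt [fO [HM HO]]]]]]]]]] HL Ei; subst p.
have HR' := HR; dbase HR'.
have LS := lseed_ok i0 iN L0 HL Hlt.
stp. stp. rwR. rewrite ifT /=; last lia.
stp. stp. stp. rwR.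
have HM' := memI_out' L HM (_ : n + i - 1 = n + i.-1) (_ : i.-1 < n).
stp. stp. stp. stp. rwR.
rewrite ifF /=; last lia.
stp. apply: reaches_now; split => //=.
move=> x xn; rewrite HM'; try lia.
rewrite memF_outv // /upd; case: eqP => [->|Ne].
  by rewrite prednK.
apply: HO; lia.
Qed.

Lemma loop3 m i L st : (n - L) + (n - i) = m -> Inv78 i L st ->
  reaches Final st (9 * (n - L) + 9 * (n - i) + 10).
Proof.
elim: m i L st => [|m IH] i L st Hm HI;
have [_ [/andP[i0 iN] [/andP[L0 Ln] [_ [_ [_ [_ [Hlt _]]]]]]]] := HI;
have RL := Rm_ge L0 Ln.
- apply: reaches_mono; last apply: (step3c HI); lia.
case: (leqP i (Rm L)) => HL.
  case: (ltngtP i n) => Hin; last by apply: reaches_mono; last apply: (step3c HI); lia.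
    apply: (@reaches_mono _ _ (9 + (9 * (n - L) + 9 * (n - i.+1) + 10))); first lia.
    apply: reaches_trans; first exact: (step3b HI HL Hin).
    move=> st' H'; apply: IH H'; lia.
  lia.
apply: (@reaches_mono _ _ (9 + (9 * (n - L.+1) + 9 * (n - i) + 10))); first lia.
apply: reaches_trans; first exact: (step3a HI HL).
move=> st' H'; apply: IH H'; lia.
Qed.

End Loop3.

End R6.
Import R6.

Module R7.

Ltac rwR := repeat match goal with H : ?R ?x = _ |- context [?R ?x] => is_var R; rewrite H end.
Ltac dbase HR := case: HR => H0 [H1 [H9 [H10 [H11 [H12 [H13 [H14 H16]]]]]]].
Ltac fsx := let k := fresh "k" in let i := fresh "i" in move=> k i _ _;
  rewrite /updF /Fs; case: k => [|[|[|[|[|[|[|k]]]]]]] //=.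

Section Glue.
Variable u : word.
Local Notation n := (size u).
Local Notation Bm := (Bm u).
Local Notation Cm := (Cm u).
Local Notation Rm := (Rm u).
Local Notation Am := (Am u).
Local Notation Fs := (Fs u).
Local Notation memI := (memI u).
Local Notation baseR := (baseR u).

Lemma Rng0 c : Rng u 0 c = 0.
Proof. by rewrite /M2.Rng big_ord0. Qed.

Lemma Tm1 p : Tm u 1 p = 0.
Proof. rewrite /Tm big_pred0 // => i; by case: i => [[|]]. Qed.

Lemma init_seg : 0 < n -> reaches (Inv1 u 2) (init_state u) 15.
Proof.
move=> n0; rewrite /init_state.
have HM0 : memI (fun a => if a < n then nth 0 u a else 0) (fun _ _ => 0) (fun _ => 0).
  move=> y; rewrite /R2.memF; case: ifP => //.
  by repeat case: ifP.
stp. have -> : (n == 0) = false by apply/eqP; lia.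
do 14 stp.
apply: reaches_now; repeat split => //=; rewrite ?updE /=; try lia.
apply: memI_ext.
  apply: (memI_store' (K:=5) (x:=1)); [apply: (memI_store' (K:=4) (x:=1)); [apply: (memI_store' (K:=3) (x:=1)); [exact: HM0|lia|done|lia]|lia|done|lia]|lia|done|lia].
fsx.
- by rewrite /B1; case: i => [|[|i]] //=; rewrite Bm1.
- by rewrite /C1; case: i => [|[|i]] //=; rewrite Cm1.
- by rewrite Rng_S Rng_S Rng0 Cm0 Cm1 //; case: i => [|[|i]].
- by rewrite Tm_S // Tm1 /M3.Pm Bm1; case: i => [|[|i]].
- by rewrite Am1.
Qed.

Lemma p1to2 st : Post1 u st -> reaches (Inv2 u 1) st 2.
Proof.
case: st => p R M [/= Hp [HR HM]]; subst p.
have HR' := HR; dbase HR'.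
stp. stp. apply: reaches_now; repeat split => //=; rewrite ?updE /=; rwR; try lia.
by rewrite (Em0 u).
Qed.

Lemma p2to78 st : 0 < n -> Post2 u st -> reaches (Inv78 u 1 1) st 6.
Proof.
case: st => p R M n0 [/= Hp [HR HM]]; subst p.
have HR' := HR; dbase HR'.
stp. stp. stp. rwR. stp. rewrite (memI_blk (K:=6) HM isT n0) /=.
stp. stp. rwR. have -> : (1 - n == 0) = true by apply/eqP; lia.
apply: reaches_now; repeat split => //=; rewrite ?updE /=; rwR; try lia.
- by rewrite (Rm_S u 0) (Rm0 u) max0n.
- exists (fun _ => 0); split => // x; lia.
Qed.

Lemma whole : 0 < n -> reaches (Final u) (init_state u) (100 * n + 100).
Proof.
move=> n0.
have B1 : Bm 1 = 0 := Bm1 u.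
apply: (@reaches_mono _ _ (15 + ((45 * (n.+1 - 2) + 9 * Bm 1 + 3) + (2 + ((16 * (n.+1 - 1) + 3) + (6 + (9 * (n - 1) + 9 * (n - 1) + 10))))))); first lia.
apply: reaches_trans; first exact: init_seg.
move=> s1 H1; apply: reaches_trans; first exact: (loop1 (erefl _) H1).
move=> s2 H2; apply: reaches_trans; first exact: (p1to2 H2).
move=> s3 H3; apply: reaches_trans; first exact: (loop2 (erefl _) H3).
move=> s4 H4; apply: reaches_trans; first exact: (p2to78 n0 H4).
move=> s5 H5; exact: (loop3 (erefl _) H5).
Qed.

End Glue.


End R7.
Import R7.

Theorem theorem1 :
  exists (prog : seq instr) (c : nat),
    forall u : word,
      exists t, t <= c * size u + c /\
        halted prog (exec prog t (init_state u)) /\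
        forall i, i < size u ->
          is_lseed (take i.+1 u) (memory (exec prog t (init_state u)) (size u + i)).
Proof.
exists prog, 100 => u.
case: (posnP (size u)) => n0.
  exists 1; split; first lia.
  rewrite /exec /= /init_state /step /= n0 /=; split => // i; lia.
have [t [Ht [H1 H2]]] := whole n0.
by exists t.
Qed.
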